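(* For every homeomorphism $f:[0,1]\to[0,1]$ we have $h(\langle f\rangle,[0,1])=+\infty$, where $\langle f\rangle=\{f^n:n\in\mathbb{Z}\}$.
   Context: For a subgroup $G$ of the group of homeomorphisms of a space $A$ (acting by $gx=g(x)$), a nonempty subset $Y\subseteq A$ is invariant if $g(y)\in Y$ for all $g\in G$, $y\in Y$. The height of $(G,A)$ is $h(G,A)=\sup\{n\geq 0:$ there exist distinct closed invariant subsets $Y_0\subset Y_1\subset\cdots\subset Y_n=A\}$ (possibly $+\infty$). *)

(* Defs.v *)
From HB Require Import structures.
From mathcomp Require Import all_boot all_order all_algebra.
From mathcomp Require Import all_classical all_reals all_analysis.
Set Implicit Arguments. Unset Strict Implicit. Unset Printing Implicit Defensive.
Import Order.TTheory GRing.Theory Num.Theory.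
Import numFieldNormedType.Exports.
Local Open Scope classical_set_scope.
Local Open Scope ring_scope.

Definition I01 (R : realType) : set R := `[0%R, 1%R]%classic.
Arguments I01 R : clear implicits.

(* f : [0,1] -> [0,1] is a homeomorphism with inverse g (both given as maps
   R -> R, only their values on [0,1] matter). *)
Definition homeo_pair (R : realType) (f g : R -> R) : Prop :=
  (forall x, I01 R x -> I01 R (f x)) /\
  (forall x, I01 R x -> I01 R (g x)) /\
  (forall x, I01 R x -> g (f x) = x) /\
  (forall x, I01 R x -> f (g x) = x) /\
  {within I01 R, continuous f} /\ {within I01 R, continuous g}.

(* Y is invariant under the cyclic group <f> = {f^n : n in Z}, where
   f^n = iter n f for n >= 0 and f^(-n) = iter n g (g = f^{-1}). *)
Definition cyc_invariant (R : realType) (f g : R -> R) (Y : set R) : Prop :=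
  forall (n : nat) (y : R), Y y -> Y (iter n f y) /\ Y (iter n g y).

Definition closed_inv (R : realType) (f g : R -> R) (Y : set R) : Prop :=
  [/\ Y !=set0, Y `<=` I01 R, closed (Y : set (subspace (I01 R)))
    & cyc_invariant f g Y].

Definition has_chain (R : realType) (f g : R -> R) (n : nat) : Prop :=
  exists Y : nat -> set R,
    [/\ (forall i, (i <= n)%N -> closed_inv f g (Y i)),
        (forall i, (i < n)%N -> Y i `<` Y i.+1) & Y n = I01 R].

(* h(<f>, [0,1]) = +oo: the set of lengths n admitting such a chain is
   unbounded. *)
Definition height_infinite (R : realType) (f g : R -> R) : Prop :=
  forall N : nat, exists n : nat, (N <= n)%N /\ has_chain f g n.

(* Main.v *)
Require Import Defs.
From HB Require Import structures.
From mathcomp Require Import all_boot all_order all_algebra.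
From mathcomp Require Import all_classical all_reals all_analysis.
Set Implicit Arguments. Unset Strict Implicit. Unset Printing Implicit Defensive.
Import Order.TTheory GRing.Theory Num.Theory.
Import numFieldNormedType.Exports.
Local Open Scope classical_set_scope.
Local Open Scope ring_scope.

Lemma I01P (R : realType) (x : R) : I01 R x <-> 0 <= x <= 1.
Proof. by rewrite /I01 /= in_itv. Qed.

Lemma closed_I01 (R : realType) : closed (I01 R).
Proof. exact: interval_closed. Qed.

Lemma stable_inv (R : realType) (f g : R -> R) (Y : set R) :
  (forall z, Y z -> Y (f z) /\ Y (g z)) -> cyc_invariant f g Y.
Proof.
move=> H n y Yy; elim: n => [|n [IH1 IH2]] //=.
by split; [exact: (H _ IH1).1 | exact: (H _ IH2).2].
Qed.

Lemma closure_sub_I (R : realType) (S : set R) : S `<=` I01 R -> closure S `<=` I01 R.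
Proof.
move=> SI; apply: subset_trans (closureS SI) _.
by have := @closed_I01 R; rewrite /closed.
Qed.

Lemma closure_stable1 (R : realType) (f : R -> R) (S : set R) :
  {within I01 R, continuous f} -> S `<=` I01 R ->
  (forall z, S z -> S (f z)) -> forall z, closure S z -> closure S (f z).
Proof.
move=> fc SI Sf z cz.
have Iz := closure_sub_I SI cz.
move/subspace_continuousP: fc => /(_ z Iz) fc B Bnb.
have := fc B Bnb.
rewrite /= nbhs_simpl /= => W.
have [s [Ss Ws]] := cz _ W.
by exists (f s); split; [exact: Sf | exact: Ws (SI _ Ss)].
Qed.
From mathcomp Require Import lra.

Definition orb (R : realType) (f g : R -> R) (y z : R) :=
  exists m, z = iter m f y \/ z = iter m g y.

Definition Sk (R : realType) (f g : R -> R) (x : nat -> R) (k : nat) : set R :=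
  [set z | exists i, (i <= k)%N /\ orb f g (x i) z].

Lemma iterI (R : realType) (f : R -> R) : (forall x, I01 R x -> I01 R (f x)) ->
  forall n y, I01 R y -> I01 R (iter n f y).
Proof. by move=> H; elim=> [|n IH] y Iy //=; apply/H/IH. Qed.

Lemma Sk_I (R : realType) (f g : R -> R) x k : homeo_pair f g ->
  (forall i, I01 R (x i)) -> Sk f g x k `<=` I01 R.
Proof.
move=> [Hf [Hg _]] Ix z [i [_ [m [->|->]]]]; exact: iterI.
Qed.

Lemma Sk_stable (R : realType) (f g : R -> R) x k : homeo_pair f g ->
  (forall i, I01 R (x i)) -> forall z, Sk f g x k z ->
  Sk f g x k (f z) /\ Sk f g x k (g z).
Proof.
move=> [Hf [Hg [gf [fg _]]]] Ix z [i [ik [m [->|->]]]].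
- split; exists i; split => //.
  + by exists m.+1; left.
  + case: m => [|m]; first by exists 1%N; right.
    by exists m; left; rewrite /= gf //; apply: iterI.
- split; exists i; split => //.
  + case: m => [|m]; first by exists 1%N; left.
    by exists m; right; rewrite /= fg //; apply: iterI.
  + by exists m.+1; right.
Qed.

Lemma chain_from_points (R : realType) (f g : R -> R) (u v : R) (x : nat -> R) :
  homeo_pair f g ->
  (forall i, I01 R (x i)) -> (forall i, u < x i < v) ->
  (forall i j, (i < j)%N -> x i < x j) ->
  (forall i m, u < iter m f (x i) < v -> iter m f (x i) = x i) ->
  (forall i m, u < iter m g (x i) < v -> iter m g (x i) = x i) ->
  height_infinite f g.
Proof.
move=> H Ix xuv xinc Hf Hg N.
have H' := H; move: H' => [Hfi [Hgi [gf [fg [cf cg]]]]].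
have xle : forall i j, (i <= j)%N -> x i <= x j.
  move=> i j; rewrite leq_eqVlt => /orP[/eqP->//|/xinc/ltW//].
have SI := fun k => @Sk_I R f g x k H Ix.
have Sst := fun k => @Sk_stable R f g x k H Ix.
have xS : forall i k, (i <= k)%N -> Sk f g x k (x i).
  by move=> i k ik; exists i; split => //; exists 0%N; left.
have nxS : forall k, ~ closure (Sk f g x k) (x k.+1).
  move=> k cl.
  have nb : nbhs (x k.+1) `](x k), v[%classic.
    apply: open_nbhs_nbhs; split; first exact: itv_open.
    by rewrite /= in_itv /= xinc //; case/andP: (xuv k.+1).
  have [z [[i [ik [m hz]]] zB]] := cl _ nb.
  move: zB; rewrite /= in_itv /= => /andP[xkz zv].
  have uz : u < z by apply: lt_trans xkz; case/andP: (xuv k).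
  have zeq : z = x i.
    case: hz => hz; rewrite hz; [apply: Hf | apply: Hg]; by rewrite -hz uz zv.
  by move: xkz; rewrite zeq ltNge xle.
have clS : forall k, closed_inv f g (closure (Sk f g x k)).
  move=> k; split.
  - by exists (x 0%N); apply: subset_closure; apply: xS.
  - exact: closure_sub_I.
  - by apply: closed_subspaceW; apply: closed_closure.
  - apply: stable_inv => z cz; split.
    + by apply: (closure_stable1 cf (SI k)) => // w /Sst [].
    + by apply: (closure_stable1 cg (SI k)) => // w /Sst [].
have clI : closed_inv f g (I01 R).
  split.
  - by exists 0; rewrite I01P lexx ler01.
  - by [].
  - exact: closed_subspaceT.
  - by apply: stable_inv => z Iz; split; [apply: Hfi | apply: Hgi].
exists N; split => //.
exists (fun i => if (i < N)%N then closure (Sk f g x i) else I01 R); split.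
- by move=> i _; case: ifP.
- move=> i iN; rewrite iN.
  have Y1 : (if (i.+1 < N)%N then closure (Sk f g x i.+1) else I01 R) (x i.+1).
    by case: ifP => _; [apply: subset_closure; apply: xS | apply: Ix].
  have Y2 : closure (Sk f g x i) `<=` (if (i.+1 < N)%N then closure (Sk f g x i.+1) else I01 R).
    case: ifP => _; last exact: closure_sub_I.
    apply: closureS => z [j [ji oz]]; exists j; split => //; exact: leqW.
  split => // sub; exact: nxS (sub _ Y1).
- by rewrite ltnn.
Qed.

Lemma I01_conv (R : realType) (u v y : R) : I01 R u -> I01 R v -> u <= y -> y <= v -> I01 R y.
Proof.
rewrite !I01P => /andP[u0 _] /andP[_ v1] uy yv.
by rewrite (le_trans u0 uy) (le_trans yv v1).
Qed.

Lemma pts (R : realType) (u v : R) : I01 R u -> I01 R v -> u < v ->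
  exists x : nat -> R, [/\ (forall i, I01 R (x i)), (forall i, u < x i < v) &
    (forall i j, (i < j)%N -> x i < x j)].
Proof.
move=> Iu Iv uv.
pose d (i : nat) : R := (i.+2%:R)^-1.
have d0 : forall i, 0 < d i by move=> i; rewrite invr_gt0 ltr0n.
have d1 : forall i, d i < 1 by move=> i; rewrite invf_lt1 ?ltr0n // ltr1n.
have dd : forall i j, (i < j)%N -> d j < d i.
  by move=> i j ij; rewrite ltf_pV2 ?posrE ?ltr0n // ltr_nat ltnS.
have xuv : forall i, u < v - (v - u) * d i < v.
  move=> i; have := d0 i; have := d1 i; move=> h1 h2; apply/andP; split; nra.
exists (fun i => v - (v - u) * d i); split => //.
- move=> i; case/andP: (xuv i) => h1 h2; apply: (I01_conv Iu Iv); exact: ltW.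
- by move=> i j /dd; nra.
Qed.

Lemma chain2 (R : realType) (f g : R -> R) (u v : R) :
  homeo_pair f g -> I01 R u -> I01 R v -> u < v ->
  (forall y, u < y < v ->
     (forall m, u < iter m f y < v -> iter m f y = y) /\
     (forall m, u < iter m g y < v -> iter m g y = y)) ->
  height_infinite f g.
Proof.
move=> H Iu Iv uv P.
have [x [Ix xuv xinc]] := pts Iu Iv uv.
apply: (chain_from_points H Ix xuv xinc) => i m.
- exact: (P _ (xuv i)).1.
- exact: (P _ (xuv i)).2.
Qed.

Lemma homeo_sym (R : realType) (f g : R -> R) : homeo_pair f g -> homeo_pair g f.
Proof. by move=> [a [b [c [d [e h]]]]]; do !split. Qed.

Lemma hsym (R : realType) (f g : R -> R) : height_infinite g f -> height_infinite f g.
Proof.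
move=> H N; have [n [Nn [Y [c1 c2 c3]]]] := H N.
exists n; split => //; exists Y; split => // i /c1 [a b c d]; split => //.
by move=> m y Yy; have [? ?] := d m y Yy.
Qed.

Definition incI (R : realType) (f : R -> R) :=
  forall x y, I01 R x -> I01 R y -> x <= y -> f x <= f y.
Definition sinc (R : realType) (f : R -> R) :=
  forall x y, I01 R x -> I01 R y -> x < y -> f x < f y.
Definition sdec (R : realType) (f : R -> R) :=
  forall x y, I01 R x -> I01 R y -> x < y -> f y < f x.

Lemma D (R : realType) (p q : R -> R) (a : R) :
  (forall x, I01 R x -> I01 R (p x)) -> (forall x, I01 R x -> I01 R (q x)) ->
  (forall x, I01 R x -> q (p x) = x) -> incI p -> incI q -> I01 R a -> a < p a ->
  forall y, a < y < p a ->
     (forall m, a < iter m p y < p a -> iter m p y = y) /\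
     (forall m, a < iter m q y < p a -> iter m q y = y).
Proof.
move=> Ip Iq qp mp mq Ia apa y /andP[ay ypa].
have Iy : I01 R y by apply: (I01_conv Ia (Ip _ Ia)); apply: ltW.
have Ipa := Ip _ Ia.
split.
- have C : forall m, a <= iter m p y.
    elim=> [|m IH] /=; first exact: ltW.
    apply: le_trans (ltW apa) _; apply: mp => //; exact: iterI.
  case=> [//|m] /= /andP[_ h].
  have := mp _ _ Ia (iterI Ip m Iy) (C m).
  by rewrite leNgt h.
- have C : forall m, iter m q y <= p a.
    elim=> [|m IH] /=; first exact: ltW.
    apply: (le_trans _ (ltW apa)); rewrite -[X in _ <= X](qp a Ia); apply: mq => //; exact: iterI.
  case=> [//|m] /= /andP[h _].
  have := mq _ _ (iterI Iq m Iy) Ipa (C m).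
  by rewrite qp // leNgt h.
Qed.

Lemma sinc_incI (R : realType) (f : R -> R) : sinc f -> incI f.
Proof.
move=> H x y Ix Iy; rewrite le_eqVlt => /orP[/eqP->//|/(H _ _ Ix Iy)/ltW//].
Qed.

Lemma case_inc_gt (R : realType) (f g : R -> R) : homeo_pair f g -> sinc f -> sinc g ->
  (exists a, I01 R a /\ a < f a) -> height_infinite f g.
Proof.
move=> H sf sg [a [Ia afa]].
have H' := H; move: H' => [Hfi [Hgi [gf [fg [cf cg]]]]].
apply: (chain2 H Ia (Hfi _ Ia) afa).
exact: (D Hfi Hgi gf (sinc_incI sf) (sinc_incI sg) Ia afa).
Qed.

Lemma case_inc (R : realType) (f g : R -> R) : homeo_pair f g -> sinc f -> sinc g ->
  height_infinite f g.
Proof.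
move=> H sf sg.
have H' := H; move: H' => [Hfi [Hgi [gf [fg [cf cg]]]]].
have I0 : I01 R 0 by rewrite I01P lexx ler01.
have I1 : I01 R 1 by rewrite I01P lexx ler01.
case: (pselect (forall y, I01 R y -> f y = y)) => [fid|].
  have gid : forall y, I01 R y -> g y = y by move=> y Iy; rewrite -{1}(fid y Iy) gf.
  apply: (chain2 H I0 I1 ltr01) => y /andP[y0 y1].
  have Iy : I01 R y by rewrite I01P (ltW y0) (ltW y1).
  have A : forall (p : R -> R), (forall y, I01 R y -> p y = y) -> forall m, iter m p y = y.
    by move=> p hp; elim=> [|m IH] //=; rewrite IH hp.
  by split => m _; apply: A.
move=> /existsNP [a /not_implyP [Ia fa]].
have [afa|faa] : a < f a \/ f a < a.
  by case: (ltgtP a (f a)) => [h|h|h]; [left|right|exfalso; apply: fa].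
  exact: (case_inc_gt H sf sg (ex_intro _ a (conj Ia afa))).
apply: hsym; apply: (case_inc_gt (homeo_sym H) sg sf); exists a; split => //.
by rewrite -{1}(gf a Ia); apply: sg => //; apply: Hfi.
Qed.

Definition sd (R : realType) (f : R -> R) (b : bool) (w : R) :=
  if b then w < f w else f w < w.

Lemma sd_flip (R : realType) (f g : R -> R) b w : homeo_pair f g -> sdec f -> sdec g ->
  I01 R w -> sd f b w -> sd f (~~ b) (f w) /\ sd f (~~ b) (g w).
Proof.
move=> [Hfi [Hgi [gf [fg _]]]] sf sg Iw; rewrite /sd; case: b => /= h; split.
- exact: (sf _ _ Iw (Hfi _ Iw) h).
- by rewrite fg //; have := sg _ _ Iw (Hfi _ Iw) h; rewrite gf.
- exact: (sf _ _ (Hfi _ Iw) Iw h).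
- by rewrite fg //; have := sg _ _ (Hfi _ Iw) Iw h; rewrite gf.
Qed.

Lemma sd_excl (R : realType) (f : R -> R) b w : sd f b w -> sd f (~~ b) w -> False.
Proof. by rewrite /sd; case: b => /= h1 h2; have := lt_trans h1 h2; rewrite ltxx. Qed.

Lemma iter2 (R : realType) (p : R -> R) y j : iter (j.*2) p y = iter j (p \o p) y.
Proof. by elim: j => [|j IH] //; rewrite doubleS /= IH. Qed.

Lemma dec_orbit (R : realType) (f g : R -> R) (u v : R) b :
  homeo_pair f g -> sdec f -> sdec g ->
  (forall y, u < y < v -> I01 R y /\ sd f b y) ->
  (forall y, u < y < v ->
     (forall m, u < iter m (f \o f) y < v -> iter m (f \o f) y = y) /\
     (forall m, u < iter m (g \o g) y < v -> iter m (g \o g) y = y)) ->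
  (forall y, u < y < v ->
     (forall m, u < iter m f y < v -> iter m f y = y) /\
     (forall m, u < iter m g y < v -> iter m g y = y)).
Proof.
move=> H sf sg S P y yuv.
have [Iy sy] := S y yuv.
have [Ph Pk] := P y yuv.
have H' := H; move: H' => [Hfi [Hgi _]].
have Ihf : forall x, I01 R x -> I01 R ((f \o f) x) by move=> x Ix; apply/Hfi/Hfi.
have Ihg : forall x, I01 R x -> I01 R ((g \o g) x) by move=> x Ix; apply/Hgi/Hgi.
have sdh : forall j, sd f b (iter j (f \o f) y).
  elim=> [|j IH] //=.
  have Ij := iterI Ihf j Iy.
  have [h1 _] := sd_flip H sf sg Ij IH.
  have [h2 _] := sd_flip H sf sg (Hfi _ Ij) h1.
  by rewrite negbK in h2.
have sdk : forall j, sd f b (iter j (g \o g) y).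
  elim=> [|j IH] //=.
  have Ij := iterI Ihg j Iy.
  have [_ h1] := sd_flip H sf sg Ij IH.
  have [_ h2] := sd_flip H sf sg (Hgi _ Ij) h1.
  by rewrite negbK in h2.
split => m; rewrite -(odd_double_half m); case: (odd m);
  rewrite ?add1n ?add0n /= iter2 => hm.
- exfalso; have [_ s1] := S _ hm.
  have [s2 _] := sd_flip H sf sg (iterI Ihf _ Iy) (sdh m./2).
  exact: sd_excl s1 s2.
- exact: Ph.
- exfalso; have [_ s1] := S _ hm.
  have [_ s2] := sd_flip H sf sg (iterI Ihg _ Iy) (sdk m./2).
  exact: sd_excl s1 s2.
- exact: Pk.
Qed.

Lemma sdec2 (R : realType) (f : R -> R) : (forall x, I01 R x -> I01 R (f x)) ->
  sdec f -> incI (f \o f).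
Proof.
move=> Hfi sf x y Ix Iy; rewrite le_eqVlt => /orP[/eqP->//|xy] /=.
by apply/ltW/sf; [apply: Hfi | apply: Hfi | apply: sf].
Qed.

Lemma case_dec_gt (R : realType) (f g : R -> R) : homeo_pair f g -> sdec f -> sdec g ->
  (exists a, I01 R a /\ a < f (f a)) -> height_infinite f g.
Proof.
move=> H sf sg [a [Ia aha]].
have H' := H; move: H' => [Hfi [Hgi [gf [fg [cf cg]]]]].
have Ihf : forall x, I01 R x -> I01 R ((f \o f) x) by move=> x Ix; apply/Hfi/Hfi.
have Ihg : forall x, I01 R x -> I01 R ((g \o g) x) by move=> x Ix; apply/Hgi/Hgi.
have kh : forall x, I01 R x -> (g \o g) ((f \o f) x) = x.
  by move=> x Ix /=; rewrite gf ?gf //; apply: Hfi.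
have Iha := Ihf _ Ia.
apply: (chain2 H Ia Iha aha).
apply: (@dec_orbit R f g a (f (f a)) (a < f a)) => //; last first.
  exact: (D Ihf Ihg kh (sdec2 Hfi sf) (sdec2 Hgi sg) Ia aha).
move=> y /andP[ay yha].
have Iy : I01 R y by apply: (I01_conv Ia Iha); apply: ltW.
split => //.
have [afa|faa] : a < f a \/ f a < a.
  case: (ltgtP a (f a)) => [h|h|h]; [by left|by right|].
  by move: aha; rewrite -h -h ltxx.
- rewrite afa /sd.
  have s1 : sd f true a by [].
  have [s2 _] := sd_flip H sf sg Ia s1.
  have [s3 _] := sd_flip H sf sg (Hfi _ Ia) s2.
  rewrite /sd /= in s3.
  have := sf _ _ Iy Iha yha => h5; apply: lt_trans yha _; apply: lt_trans s3 _.
  exact: h5.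
- have -> : (a < f a) = false by apply/negbTE; rewrite -leNgt ltW.
  have := sf _ _ Ia Iy ay => h5; rewrite /sd; apply: lt_trans _ ay; apply: lt_trans _ faa; exact: h5.
Qed.

Lemma case_dec_id (R : realType) (f g : R -> R) : homeo_pair f g -> sdec f -> sdec g ->
  (forall y, I01 R y -> f (f y) = y) -> height_infinite f g.
Proof.
move=> H sf sg hid.
have H' := H; move: H' => [Hfi [Hgi [gf [fg [cf cg]]]]].
have I0 : I01 R 0 by rewrite I01P lexx ler01.
have I1 : I01 R 1 by rewrite I01P lexx ler01.
have [c Ic fc] : exists2 c, c \in `[0, 1] & f c - c = 0.
  apply: IVT; first exact: ler01.
    apply/subspace_continuousP => x Ix; apply: cvgB.
      by move/subspace_continuousP: cf; apply.
    exact: cvg_within.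
  have := Hfi _ I0; have := Hfi _ I1; rewrite !I01P => /andP[h1 h2] /andP[h3 h4].
  apply/andP; split.
    by rewrite ge_min; apply/orP; right; lra.
  by rewrite le_max; apply/orP; left; lra.
have Ic' : I01 R c by [].
have fcc : f c = c by lra.
have c0 : 0 < c.
  rewrite lt_neqAle; move: Ic; rewrite in_itv /= => /andP[-> _]; rewrite andbT.
  apply/eqP => c0; have := sf _ _ I0 I1 ltr01; rewrite -c0 in fcc; rewrite fcc.
  by have := Hfi _ I1; rewrite I01P => /andP[h _] h'; have := le_lt_trans h h'; rewrite ltxx.
apply: (chain2 H I0 Ic' c0).
have A : forall (p : R -> R), (forall y, I01 R y -> p y = y) -> forall y, I01 R y -> forall m, iter m p y = y.
  by move=> p hp y Iy; elim=> [|m IH] //=; rewrite IH hp.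
apply: (@dec_orbit R f g 0 c true) => // y /andP[y0 yc];
  have Iy : I01 R y by apply: (I01_conv I0 Ic'); apply: ltW.
- split => //; have := sf _ _ Iy Ic' yc; rewrite fcc /sd /= => h5; exact: lt_trans yc h5.
- split => m _; apply: A => // z Iz /=.
  have Ig := Hgi _ Iz; have Igg := Hgi _ Ig; by rewrite -[LHS](hid _ Igg) !fg.
Qed.

Lemma case_dec (R : realType) (f g : R -> R) : homeo_pair f g -> sdec f -> sdec g ->
  height_infinite f g.
Proof.
move=> H sf sg.
have H' := H; move: H' => [Hfi [Hgi [gf [fg [cf cg]]]]].
case: (pselect (forall y, I01 R y -> f (f y) = y)) => [hid|].
  exact: case_dec_id.
move=> /existsNP [a /not_implyP [Ia ha]].
have [aha|haa] : a < f (f a) \/ f (f a) < a.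
  by case: (ltgtP a (f (f a))) => [h|h|h]; [left|right|exfalso; apply: ha].
  exact: (case_dec_gt H sf sg (ex_intro _ a (conj Ia aha))).
apply: hsym; apply: (case_dec_gt (homeo_sym H) sg sf); exists a; split => //.
have Ig := Hgi _ Ia; have Igg := Hgi _ Ig.
rewrite ltNge; apply/negP => h.
have := sdec2 Hfi sf Igg Ia h; rewrite /= !fg // => h2.
by have := le_lt_trans h2 haa; rewrite ltxx.
Qed.

Lemma mono_cases (R : realType) (f g : R -> R) : homeo_pair f g -> sinc f \/ sdec f.
Proof.
move=> [Hfi [Hgi [gf [fg [cf cg]]]]].
have inj : {in `[0, 1] &, injective f}.
  by move=> x y Ix Iy e; rewrite -(gf x Ix) -(gf y Iy) e.
have [h|h] := itv_continuous_inj_mono cf inj; [left|right] => x y Ix Iy xy; exact: h.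
Qed.

Theorem theorem2p4 (R : realType) (f g : R -> R) :
  homeo_pair f g -> height_infinite f g.
Proof.
move=> H.
have H' := H; move: H' => [Hfi [Hgi [gf [fg [cf cg]]]]].
have I0 : I01 R 0 by rewrite I01P lexx ler01.
have I1 : I01 R 1 by rewrite I01P lexx ler01.
have [sf|sf] := mono_cases H; have [sg|sg] := mono_cases (homeo_sym H).
- exact: case_inc.
- exfalso; have := sf _ _ (Hgi _ I1) (Hgi _ I0).
  have := sg _ _ I0 I1 ltr01 => h1 /(_ h1); rewrite !fg // => h2.
  by have := lt_trans h2 ltr01; rewrite ltxx.
- exfalso; have := sf _ _ (Hgi _ I0) (Hgi _ I1).
  have := sg _ _ I0 I1 ltr01 => h1 /(_ h1); rewrite !fg // => h2.
  by have := lt_trans h2 ltr01; rewrite ltxx.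
- exact: case_dec.
Qed.
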